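(* Let $G$ be an undirected chordal graph with terminals $s,t$, and let $G'$ be the graph obtained from $G$ by deleting every vertex and every edge that lies on no $s$-$t$ path. Let $T^*$ be the set of vertices $x$ of $G'$ for which there exists an edge $(a,b)\in E(G')$ with $x\in N_{G'}(a)\cap N_{G'}(b)$ such that $G'-x$ contains an $s$-$t$ path using the edge $(a,b)$. Then $T^*$ is a minimum-cardinality tracking set for $G$.
   Context: Graphs are simple. A chordal graph is a graph in which every cycle of length greater than three has a chord. An $s$-$t$ path is a simple path from $s$ to $t$. A set $T\subseteq V(G)$ is a tracking set if for any two distinct $s$-$t$ paths $P_1,P_2$, the sequence of vertices of $T\cap V(P_1)$ in the order encountered along $P_1$ differs from the sequence of vertices of $T\cap V(P_2)$ in the order encountered along $P_2$. $N_{H}(v)$ denotes the neighbourhood of $v$ in $H$; $H-x$ denotes the graph with vertex $x$ deleted. *)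

(* Defs.v *)
(* Simple graphs: symmetric irreflexive relation e on a finType. *)
From mathcomp Require Import all_boot.
Set Implicit Arguments. Unset Strict Implicit. Unset Printing Implicit Defensive.

Section Graphs.
Variable T : finType.

Definition stpath_in (R : T -> T -> Prop) (V : T -> Prop) (s t : T)
  (p : seq T) : Prop :=
  [/\ 0 < size p, nth s p 0 = s, last s p = t, uniq p &
      (forall x, x \in p -> V x) /\
      (forall i, i.+1 < size p -> R (nth s p i) (nth s p i.+1))].

Definition stpath (e : rel T) (s t : T) (p : seq T) : Prop :=
  stpath_in (fun a b => e a b) (fun _ => True) s t p.

Definition uses_edge (p : seq T) (a b : T) : Prop :=
  exists i, i.+1 < size p /\
    ((nth a p i = a /\ nth a p i.+1 = b) \/ (nth a p i = b /\ nth a p i.+1 = a)).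

Definition chordal (e : rel T) : Prop :=
  forall c : seq T, uniq c -> 3 < size c -> cycle e c ->
    exists x0 : T, exists i j : nat,
      [/\ i < j, j < size c, e (nth x0 c i) (nth x0 c j),
          j != i.+1 & ~~ ((i == 0) && (j == (size c).-1))].

Definition Gp_vert (e : rel T) (s t : T) (x : T) : Prop :=
  exists p, stpath e s t p /\ x \in p.
Definition Gp_edge (e : rel T) (s t : T) (a b : T) : Prop :=
  e a b /\ exists p, stpath e s t p /\ uses_edge p a b.

Definition Tstar_mem (e : rel T) (s t : T) (x : T) : Prop :=
  Gp_vert e s t x /\
  exists a b : T,
    [/\ Gp_edge e s t a b, Gp_edge e s t a x, Gp_edge e s t b x &
        exists p, stpath_in (Gp_edge e s t) (fun y => Gp_vert e s t y /\ y <> x) s t p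
                  /\ uses_edge p a b].

Definition tracking_set (e : rel T) (s t : T) (S : {set T}) : Prop :=
  forall p1 p2 : seq T, stpath e s t p1 -> stpath e s t p2 -> p1 <> p2 ->
    [seq x <- p1 | x \in S] <> [seq x <- p2 | x \in S].

Definition min_tracking_set (e : rel T) (s t : T) (S : {set T}) : Prop :=
  tracking_set e s t S /\ forall S' : {set T}, tracking_set e s t S' -> #|S| <= #|S'|.

End Graphs.

(* Main.v *)
Require Import Defs.
From mathcomp Require Import all_boot.
From mathcomp Require Import zify.
Set Warnings "-notation-overridden".
Set Implicit Arguments. Unset Strict Implicit. Unset Printing Implicit Defensive.

Section Main.
Variable T : finType.
Variable e : rel T.
Hypothesis e_sym : symmetric e.
Hypothesis e_irr : irreflexive e.
Hypothesis e_chordal : chordal e.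

Lemma stpath_inE (R : T -> T -> Prop) V s t p :
  stpath_in R V s t p <->
  [/\ 0 < size p, head s p = s, last s p = t, uniq p &
      (forall x, x \in p -> V x) /\
      (forall i, i.+1 < size p -> R (nth s p i) (nth s p i.+1))].
Proof. by rewrite /stpath_in nth0. Qed.

Definition sp s t (p : seq T) : Prop :=
  [/\ 0 < size p, head s p = s, last s p = t, uniq p & sorted e p].

Lemma stpathE s t p : stpath e s t p <-> sp s t p.
Proof.
rewrite /stpath /sp; split.
  move/stpath_inE=> [h1 h2 h3 h4 [_ h5]]; split => //; exact/(sortedP s).
case=> h1 h2 h3 h4 /(sortedP s) h5; apply/stpath_inE; split => //.
Qed.


Lemma chord_split c : uniq c -> 3 < size c -> cycle e c ->
  exists c1 x c2 y c3, [/\ c = c1 ++ x :: c2 ++ y :: c3, e x y, c2 != [::] &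
                          (c1 != [::]) || (c3 != [::])].
Proof.
move=> uc sc cc; have [x0 [i [j [lij ljs exy nj ni]]]] := e_chordal uc sc cc.
have lis : i < size c by apply: ltn_trans ljs.
have ij1 : i.+1 < j by rewrite ltn_neqAle eq_sym nj lij.
exists (take i c), (nth x0 c i), (take (j - i.+1) (drop i.+1 c)), (nth x0 c j), (drop j.+1 c).
split => //.
- rewrite -{1}(cat_take_drop i c) (drop_nth x0 lis); congr (_ ++ _ :: _).
  rewrite -{1}(cat_take_drop (j - i.+1) (drop i.+1 c)) drop_drop subnK ?(ltnW ij1) //.
  by rewrite (drop_nth x0 ljs).
- rewrite -size_eq0 size_take size_drop.
  case: ifP => _; rewrite -lt0n subn_gt0 //.
  by apply: ltn_trans ljs.
- rewrite -!size_eq0 size_take size_drop lis.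
  case: (posnP i) => [i0|//]; rewrite /=.
  rewrite i0 /= in ni; move: ni ljs; case: (size c) => // n /= ni ljs.
  apply/negP => /eqP h; move/negP: ni; apply; apply/eqP; lia.
Qed.


Lemma shortcut b P L x M y R : b :: P = L ++ x :: M ++ y :: R -> e x y -> M != [::] ->
  path e b P ->
  exists p', [/\ subseq p' P, size p' < size P, 0 < size p', path e b p' &
                 last b p' = last b P].
Proof.
case: L => [|b' L'] /=.
  case=> <- -> exy M0 pP; exists (y :: R); split => //.
  - exact: suffix_subseq.
  - by case: M exy pP M0 => // m M _ _ _; rewrite size_cat /=; lia.
  - by move: pP; rewrite cat_path /= exy => /and3P[].
  - by rewrite last_cat.
case=> _ -> exy M0 pP; exists (L' ++ x :: y :: R); split => //.
- by rewrite subseq_cat2l /= eqxx suffix_subseq.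
- by case: M exy pP M0 => // m M _ _ _; rewrite !size_cat /= size_cat /=; lia.
- by rewrite size_cat /=; lia.
- move: pP; rewrite !cat_path /= => /and3P[-> ->]; rewrite cat_path /= => /and3P[_ _ ->].
  by rewrite exy.
- by rewrite !last_cat /= last_cat.
Qed.

Lemma region_u n a b p : size p <= n -> uniq (a :: b :: p) -> e a b -> path e b p ->
  e a (last b p) -> 0 < size p -> exists2 z, z \in p & e a z && e b z.
Proof.
elim: n a b p => [|n IH] a b p; first by case: p.
move=> sp up eab pp eal p0.
have red : forall p', uniq (a :: b :: p') -> path e b p' -> e a (last b p') ->
    0 < size p' -> size p' < size p -> {subset p' <= p} -> exists2 z, z \in p & e a z && e b z.
  move=> p' u' pp' el' s0 ss sub.
  have [|z zp' H] := IH a b p' _ u' eab pp' el' s0; first by lia.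
  by exists z => //; apply: sub.
case: p sp up pp eal p0 red => [//|x [|x2 p]] sp up pp eal _ red.
  by exists x; rewrite ?mem_seq1 //= eal; move: pp => /= /andP[->].

have cc : cycle e [:: a, b, x, x2 & p].
  rewrite /= rcons_path eab -(e_sym a) /=; move: pp eal => /= /and3P[h1 h2 h3] h4.
  by rewrite h1 h2 h3 h4.
have [c1 [x' [c2 [y [c3 [hc exy c20 c13]]]]]] := chord_split up isT cc.
case: c1 hc c13 => [|a' c1'] /= hc c13.
  case: hc => ax'; case: c2 c20 => [//|b' c2'] _ [bb' hP].
  rewrite -ax' in exy.
  have c30 : c3 != [::] by [].
  apply: (red (rcons c2' y)).
  - apply: subseq_uniq up; rewrite hP /= !eqxx -cats1.
    by rewrite -[y :: c3]/([:: y] ++ c3) catA prefix_subseq.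
  - by move: pp; rewrite hP -[y :: c3]/([:: y] ++ c3) catA cat_path cats1 => /andP[].
  - by rewrite last_rcons.
  - by rewrite size_rcons.
  - by rewrite hP size_rcons size_cat; case: (c3) c30 => // ? ? _ /=; lia.
  - by move=> z; rewrite hP -cats1 => zi; rewrite -[y :: c3]/([:: y] ++ c3) catA mem_cat zi.
case: hc => aa' hP.
have [p' [sub ss s0 pp' lp']] := shortcut hP exy c20 pp.
apply: (red p') => //.
- by apply: subseq_uniq up; rewrite /= !eqxx.
- by rewrite lp'.
- by move=> z; apply: (mem_subseq sub).
Qed.


Lemma region a b p : e a b -> path e b p -> e a (last b p) -> last b p != b ->
  a \notin b :: p -> exists2 z, z \in p & e a z && e b z.
Proof.
move=> eab pp; case: (shortenP pp) => p' pp' up' sub eal lb anp.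
have u1 : uniq (a :: b :: p').
  rewrite cons_uniq up' andbT; apply: contra anp.
  by rewrite !inE => /orP[->//|/sub ->]; rewrite orbT.
have s0 : 0 < size p'.
  by move: lb; case: (p') => [|//]; rewrite /= eqxx.
have [z zp H] := @region_u (size p') a b p' (leqnn _) u1 eab pp' eal s0.
by exists z => //; apply: sub.
Qed.


Lemma sorted_ext A u r : sorted e (A ++ u :: r) = sorted e (rcons A u) && path e u r.
Proof. exact: sorted_cat_cons. Qed.


Lemma splice s t A u r1 z r2 : sp s t (A ++ u :: r1 ++ z :: r2) -> e u z ->
  sp s t (A ++ u :: z :: r2).
Proof.
case=> _ h1 h2 h3 h4 euz; split.
- by rewrite size_cat /= addnS.
- by move: h1; case: (A).
- by move: h2; rewrite !last_cat /= last_cat.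
- apply: subseq_uniq h3; rewrite subseq_cat2l /= eqxx.
  exact: suffix_subseq.
- move: h4; rewrite !sorted_ext => /andP[-> /=]; rewrite cat_path /= euz.
  by case/and3P.
Qed.

Lemma insert s t L a b R x : sp s t (L ++ a :: b :: R) -> x \notin (L ++ a :: b :: R) ->
  e a x -> e x b -> sp s t (L ++ a :: x :: b :: R).
Proof.
case=> _ h1 h2 h3 h4 xn eax exb; split.
- by rewrite size_cat /= addnS.
- by move: h1; case: (L).
- by move: h2; rewrite !last_cat.
- have -> : L ++ a :: x :: b :: R = (L ++ [:: a]) ++ [:: x] ++ b :: R by rewrite -catA.
  rewrite uniq_catCA cat1s cons_uniq.
  by rewrite -catA cat1s xn h3.
- by move: h4; rewrite !sorted_ext /= eax exb => /and3P[-> _ ->].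
Qed.

Lemma uses_l (L : seq T) a b R : uses_edge (L ++ a :: b :: R) a b.
Proof.
exists (size L); split; first by rewrite size_cat /=; lia.
by left; rewrite !nth_cat ltnn subnn ltnNge leqnSn /= subSn // subnn.
Qed.

Lemma uses_r (L : seq T) a b R : uses_edge (L ++ a :: b :: R) b a.
Proof.
exists (size L); split; first by rewrite size_cat /=; lia.
by right; rewrite !nth_cat ltnn subnn ltnNge leqnSn /= subSn // subnn.
Qed.

Lemma uses_nth (p : seq T) i x0 : i.+1 < size p -> uses_edge p (nth x0 p i) (nth x0 p i.+1).
Proof.
move=> lt; exists i; split => //; left.
split; apply: set_nth_default => //; exact: ltnW.
Qed.

Lemma tstar_intro s t L a b R x : sp s t (L ++ a :: b :: R) -> x \notin L ++ a :: b :: R ->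
  e a x -> e b x -> Tstar_mem e s t x.
Proof.
move=> hQ xn eax ebx.
have hQ' := insert hQ xn eax (etrans (e_sym _ _) ebx).
have eab : e a b by case: hQ => _ _ _ _; rewrite sorted_ext /= => /andP[_ /andP[]].
split.
  by exists (L ++ a :: x :: b :: R); split; [apply/stpathE|rewrite mem_cat !inE eqxx !orbT].
exists a, b; split.
- by split => //; exists (L ++ a :: b :: R); split; [apply/stpathE | apply: uses_l].
- by split => //; exists (L ++ a :: x :: b :: R); split; [apply/stpathE | apply: uses_l].
- split => //; exists (L ++ a :: x :: b :: R); split; first by apply/stpathE.
  by rewrite -[a :: _]cat1s catA; apply: uses_r.
exists (L ++ a :: b :: R); split; last by apply: uses_l.
case: hQ => h0 h1 h2 h3 h4; apply/stpath_inE; split => //; split.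
  move=> y yQ; split; first by exists (L ++ a :: b :: R); split => //; apply/stpathE.
  by move=> yx; rewrite -yx yQ in xn.
move=> i lt; split; first by move/(sortedP s): h4; apply.
exists (L ++ a :: b :: R); split; first by apply/stpathE.
exact: uses_nth.
Qed.


Lemma catL (L p q : seq T) : L ++ p = L ++ q -> p = q.
Proof. by elim: L => //= ? ? IH [] /IH. Qed.

Lemma uniq_notin (L : seq T) x R : uniq (L ++ x :: R) -> x \notin L ++ R.
Proof.
have -> : L ++ x :: R = L ++ [:: x] ++ R by [].
by rewrite uniq_catCA cat1s cons_uniq => /andP[].
Qed.

Lemma last_rev_belast (c : T) rc : last (last c rc) (rev (belast c rc)) = c.
Proof. by case: rc => [|y q] //=; rewrite rev_cons last_rcons. Qed.

Lemma diverge (w : T) p1 p2 : p1 != p2 -> uniq (w :: p1) -> uniq (w :: p2) ->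
  last w p1 = last w p2 -> exists A u v1 v2 r1 r2,
  [/\ w :: p1 = A ++ u :: v1 :: r1, w :: p2 = A ++ u :: v2 :: r2 & v1 != v2].
Proof.
elim: p1 w p2 => [|y1 q1 IH] w [|y2 q2] //.
- move=> _ _ /= /andP[wn _] /= lw; exfalso; move: wn.
  by rewrite lw (mem_last y2 q2).
- move=> _ /= /andP[wn _] _ lw; exfalso; move: wn.
  by rewrite -lw (mem_last y1 q1).
move=> ne u1 u2 lw; case: (eqVneq y1 y2) => [e12|n12].
  subst y2; have ne' : q1 != q2 by apply: contra ne => /eqP ->.
  have [A [u [v1 [v2 [r1 [r2 [h1 h2 hv]]]]]]] :=
    IH y1 q2 ne' (proj2 (andP u1)) (proj2 (andP u2)) lw.
  by exists (w :: A), u, v1, v2, r1, r2; rewrite /= h1 h2.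
by exists [::], w, y1, y2, q1, q2.
Qed.

Lemma sp_uniq s t p : sp s t p -> uniq p. Proof. by case. Qed.

Lemma sp_edge s t A u v r : sp s t (A ++ u :: v :: r) -> e u v.
Proof. by case=> _ _ _ _; rewrite sorted_ext /= => /andP[_ /andP[]]. Qed.

Lemma av s t A u b rb c rc : sp s t (A ++ u :: b :: rb) -> sp s t (A ++ u :: c :: rc) ->
  b \notin (A ++ u :: c :: rc) -> Tstar_mem e s t b.
Proof.
move=> h1 h2 bn.
have eub := sp_edge h1; have euc := sp_edge h2.
have lt : last b rb = last c rc.
  by case: h1 => _ _ l1 _ _; case: h2 => _ _ l2 _ _; move: l1 l2; rewrite !last_cat /= => -> ->.
set W := rb ++ rev (belast c rc).
have pW : path e b W.
  rewrite cat_path; case: h1 => _ _ _ _; rewrite sorted_ext /= => /andP[_ /andP[_ ->]] /=.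
  rewrite lt rev_path (@eq_path _ _ e) => [|x y]; last by rewrite /= e_sym.
  by case: h2 => _ _ _ _; rewrite sorted_ext /= => /andP[_ /andP[_ ->]].
have lW : last b W = c by rewrite last_cat lt last_rev_belast.
have cb : c != b by apply: contraNneq bn => ->; rewrite mem_cat !inE eqxx !orbT.
have un : u \notin b :: W.
  have n1 := uniq_notin (sp_uniq h1); have n2 := uniq_notin (sp_uniq h2).
  rewrite inE mem_cat !negb_or; apply/andP; split; [|apply/andP; split].
  - by apply: contraNneq n1 => ->; rewrite mem_cat !inE eqxx orbT.
  - by apply: contra n1 => ur; rewrite mem_cat inE ur !orbT.
  - rewrite mem_rev; apply: contra n2 => /mem_belast ur.
    by rewrite mem_cat ur orbT.
have e1 : e u (last b W) by rewrite lW.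
have e2 : last b W != b by rewrite lW.
have [z zW /andP[euz ebz]] := region eub pW e1 e2 un.
move: zW; rewrite mem_cat => /orP[zr|].
  case/splitPr: zr h1 => r1 r2 h1.
  have hQ := splice (r1 := b :: r1) h1 euz.
  apply: (tstar_intro hQ) => //; last by rewrite e_sym.
  have := sp_uniq h1; rewrite -[A ++ _]/(A ++ [:: u] ++ _) catA => /uniq_notin.
  apply: contra; apply: mem_subseq; rewrite -catA subseq_cat2l /= eqxx.
  exact: suffix_subseq.
rewrite mem_rev => /mem_belast zc.
case/splitPr: zc h2 bn => r1 r2 h2 bn.
have hQ := splice h2 euz.
apply: (tstar_intro hQ) => //; last by rewrite e_sym.
apply: contra bn; apply: mem_subseq.
by rewrite subseq_cat2l /= eqxx suffix_subseq.
Qed.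


Lemma notin2 (A : seq T) u x R : uniq (A ++ u :: x :: R) -> x \notin A ++ u :: R.
Proof.
rewrite -[A ++ _]/(A ++ [:: u] ++ _) catA => /uniq_notin.
by rewrite -catA.
Qed.

Lemma headdiff s t (S : {set T}) (HS : forall x, x \in S <-> Tstar_mem e s t x)
  A u v1 r1 v2 r2 : sp s t (A ++ u :: v1 :: r1) -> sp s t (A ++ u :: v2 :: r2) ->
  v1 != v2 -> v1 \in S ->
  [seq x <- v1 :: r1 | x \in S] <> [seq x <- v2 :: r2 | x \in S].
Proof.
move=> h1 h2 n12 v1S eqf.
have v1in : v1 \in v2 :: r2.
  have : v1 \in [seq x <- v2 :: r2 | x \in S] by rewrite -eqf /= v1S mem_head.
  by rewrite mem_filter => /andP[].
have [Y [Z hYZ]] : exists Y Z, v2 :: r2 = Y ++ v1 :: Z.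
  by case/splitPr: v1in => Y Z; exists Y, Z.
have Y0 : Y != [::] by case: Y hYZ => // [[ev]]; rewrite ev eqxx in n12.
rewrite hYZ in h2 eqf.
have u2 := sp_uniq h2.
have v1Y : v1 \notin Y.
  have : A ++ u :: Y ++ v1 :: Z = (A ++ u :: Y) ++ v1 :: Z by rewrite -catA.
  move=> eq; move: u2; rewrite eq => /uniq_notin.
  by apply: contra => vY; rewrite !mem_cat inE vY !orbT.
have YnS : forall y, y \in Y -> y \notin S.
  apply/hasPn; rewrite has_filter negbK; apply/eqP.
  move: eqf; rewrite filter_cat /= v1S.
  case E: [seq x <- Y | x \in S] => [//|y F] [yv _].
  have : y \in [seq x <- Y | x \in S] by rewrite E mem_head.
  by rewrite mem_filter -yv (negbTE v1Y) andbF.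
have euv1 := sp_edge h1.
have pY : path e u Y && e (last u Y) v1.
  by case: h2 => _ _ _ _; rewrite sorted_ext cat_path /= => /andP[_ /and3P[-> -> _]].
case/andP: pY => pY eYv.
have uY : u \notin Y.
  have := uniq_notin u2; apply: contra => uY; by rewrite mem_cat mem_cat uY orbT.
have lY : last u Y != u.
  case: (Y) Y0 uY => [//|y Y'] _ uY /=; apply: contraNneq uY => <-.
  exact: mem_last.
have v1n : v1 \notin u :: Y.
  rewrite inE negb_or v1Y andbT; have := uniq_notin (sp_uniq h1).
  by apply: contraNneq => ->; rewrite mem_cat mem_head orbT.
have [z zY /andP[ev1z euz]] := region (etrans (e_sym _ _) euv1) pY (etrans (e_sym _ _) eYv) lY v1n.
have hQ := splice h2 euv1.
have zS : z \in S.
  apply/HS; apply: (tstar_intro hQ) => //.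
  case/splitPr: zY u2 => Y1 Y2.
  have -> : A ++ u :: (Y1 ++ z :: Y2) ++ v1 :: Z = (A ++ u :: Y1) ++ z :: (Y2 ++ v1 :: Z).
    by rewrite -catA /= -catA.
  move/uniq_notin; apply: contra; apply: mem_subseq.
  rewrite -catA subseq_cat2l /= eqxx catA.
  exact: suffix_subseq.
by move: (YnS z zY); rewrite zS.
Qed.


Lemma g1 s t A u v1 r1 v2 r2 : sp s t (A ++ u :: v1 :: r1) -> sp s t (A ++ u :: v2 :: r2) ->
  v1 != v2 -> Tstar_mem e s t v1 \/ Tstar_mem e s t v2.
Proof.
move=> h1 h2 n12.
case: (boolP (v2 \in A ++ u :: v1 :: r1)) => v2in; last by right; exact: av h2 h1 v2in.
left.
have n2 := notin2 (sp_uniq h2).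
have v2r1 : v2 \in r1.
  move: v2in; rewrite mem_cat !inE.
  case: (boolP (v2 \in A)) => [v2A|_]; first by move: n2; rewrite mem_cat v2A.
  case: eqP => [v2u|_]; first by move: n2; rewrite v2u mem_cat mem_head orbT.
  by rewrite eq_sym (negbTE n12).
case/splitPr: v2r1 h1 => r1a r1b h1.
have hQ := splice (r1 := v1 :: r1a) h1 (sp_edge h2).
apply: (av h1 hQ).
have := notin2 (sp_uniq h1); apply: contra; apply: mem_subseq.
by rewrite subseq_cat2l /= eqxx suffix_subseq.
Qed.

Lemma uses_dec (p : seq T) a b : uses_edge p a b ->
  exists L R, p = L ++ a :: b :: R \/ p = L ++ b :: a :: R.
Proof.
case=> i [lt h]; exists (take i p), (drop i.+2 p).
have hp : p = take i p ++ nth a p i :: nth a p i.+1 :: drop i.+2 p.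
  by rewrite -(drop_nth a lt) -(drop_nth a (ltnW lt)) cat_take_drop.
by case: h => [[h1 h2]|[h1 h2]]; [left|right]; rewrite {1}hp h1 h2.
Qed.


Lemma main_aux s t (Tstar : {set T}) (HTstar : forall x, x \in Tstar <-> Tstar_mem e s t x) :
  min_tracking_set e s t Tstar.
Proof.
split.
- move=> p1 p2 /stpathE h1 /stpathE h2 ne.
  have [q1 hq1] : exists q, p1 = s :: q.
    by case: h1; case: (p1) => //= x q _ ->; exists q.
  have [q2 hq2] : exists q, p2 = s :: q.
    by case: h2; case: (p2) => //= x q _ ->; exists q.
  have nq : q1 != q2 by apply/eqP => eq; apply: ne; rewrite hq1 hq2 eq.
  have u1 : uniq (s :: q1) by rewrite -hq1; case: h1.
  have u2 : uniq (s :: q2) by rewrite -hq2; case: h2.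
  have l12 : last s q1 = last s q2.
    by case: h1 => _ _ l1 _ _; case: h2 => _ _ l2 _ _; move: l1 l2; rewrite hq1 hq2 /= => -> ->.
  have [A [u [v1 [v2 [r1 [r2 [e1 e2 n12]]]]]]] := diverge nq u1 u2 l12.
  rewrite hq1 e1 in h1 *; rewrite hq2 e2 in h2 *.
  have ff : forall v r, [seq x <- A ++ u :: v :: r | x \in Tstar] =
      [seq x <- A ++ [:: u] | x \in Tstar] ++ [seq x <- v :: r | x \in Tstar].
    by move=> v r; rewrite -filter_cat -catA.
  rewrite !ff => /catL.
  case: (g1 h1 h2 n12) => /HTstar H.
    by move=> eq; apply: (headdiff HTstar h1 h2 n12 H); apply: eq.
  by move=> eq; apply: (headdiff HTstar h2 h1 _ H); [rewrite eq_sym | apply: esym; apply: eq].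
- move=> S' HS'; apply: subset_leq_card; apply/subsetP => x /HTstar.
  case=> _ [a [b [[eab _] [eax _] [ebx _] [p [hp up]]]]].
  case: (boolP (x \in S')) => // xn.
  have xp : x \notin p.
    apply/negP => xp; case/stpath_inE: hp => _ _ _ _ [hv _].
    by case: (hv x xp).
  have spp : sp s t p.
    case/stpath_inE: hp => h0 h1 h2 h3 [_ h4]; split => //.
    by apply/(sortedP s) => i lt; case: (h4 i lt).
  exfalso.
  have [L [R [hpe|hpe]]] := uses_dec up; rewrite hpe in spp xp.
    have spp' := insert spp xp eax (etrans (e_sym _ _) ebx).
    apply: (HS' _ _ (proj2 (stpathE _ _ _) spp) (proj2 (stpathE _ _ _) spp')).
      by move/(congr1 size); rewrite !size_cat /=; lia.
    by rewrite !filter_cat /= (negbTE xn).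
  have spp' := insert spp xp ebx (etrans (e_sym _ _) eax).
  apply: (HS' _ _ (proj2 (stpathE _ _ _) spp) (proj2 (stpathE _ _ _) spp')).
    by move/(congr1 size); rewrite !size_cat /=; lia.
  by rewrite !filter_cat /= (negbTE xn).
Qed.

End Main.

Theorem mainTheorem2 (T : finType) (e : rel T) (s t : T)
  (e_sym : symmetric e) (e_irr : irreflexive e) (e_chordal : chordal e)
  (Tstar : {set T}) (HTstar : forall x, x \in Tstar <-> Tstar_mem e s t x) :
  min_tracking_set e s t Tstar.
Proof. exact: (main_aux e_sym e_chordal HTstar). Qed.
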